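(* Let $\mathcal{F}$ be a saturated fusion system over a finite $p$-group $S$, and let $\mathcal{F}_0$ be a weakly normal subsystem of $\mathcal{F}$ over $S_0\le S$. Assume that $O^p(\Aut_{\mathcal{F}}(S_0))\le\Aut_{\mathcal{F}_0}(S_0)$. Then $O^p(\Aut_{\mathcal{F}}(P))\le\Aut_{\mathcal{F}_0}(P)$ for every $P\le S_0$. Thus, if in addition $\mathfrak{hyp}(\mathcal{F})\le S_0$, then $\mathcal{F}_0$ has $p$-power index in $\mathcal{F}$.
   Context: A subsystem $\mathcal{F}_0$ over $S_0$ is weakly normal in $\mathcal{F}$ (in the sense of Aschbacher) if $S_0$ is strongly closed in $\mathcal{F}$, $\mathcal{F}_0$ is saturated, $\mathcal{F}_0$ is $\mathcal{F}$-invariant (for $P\le Q\le S_0$ and $\phi\in\Hom_{\mathcal{F}}(Q,S_0)$, $\phi\Hom_{\mathcal{F}_0}(P,Q)\phi^{-1}\subseteq\Hom_{\mathcal{F}_0}(\phi P,\phi Q)$), and the Frattini condition holds (every $\phi\in\Hom_{\mathcal{F}}(P,S_0)$ with $P\le S_0$ factors as $\alpha\circ\phi_0$ with $\phi_0\in\Hom_{\mathcal{F}_0}(P,S_0)$, $\alpha\in\Aut_{\mathcal{F}}(S_0)$). The hyperfocal subgroup is $\mathfrak{hyp}(\mathcal{F})=\langle \phi(s)s^{-1}\mid s\in P\le S,\ \phi\in O^p(\Aut_{\mathcal{F}}(P))\rangle$. A subsystem $\mathcal{F}_0$ over $S_0\le S$ has $p$-power index in $\mathcal{F}$ if $\mathfrak{hyp}(\mathcal{F})\le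 S_0$ and $O^p(\Aut_{\mathcal{F}}(P))\le\Aut_{\mathcal{F}_0}(P)$ for each $P\le S_0$. *)

(* Defs.v *)
From mathcomp Require Import all_boot all_fingroup all_solvable.
Set Implicit Arguments. Unset Strict Implicit. Unset Printing Implicit Defensive.
Import GroupScope.

(* Fusion systems over subgroups of a finite group gT.  A morphism P -> _
   is a finite function gT -> gT, equal to 1 outside its domain P. *)
Section FusionDefs.
Variable gT : finGroupType.
Implicit Types (P Q R S : {set gT}) (f g : {ffun gT -> gT}).
Implicit Types (F : {set gT} -> {set {ffun gT -> gT}}).

Definition inj_hom P Q f : bool :=
  [&& [forall x in P, forall y in P, f (x * y) == f x * f y],
      [forall x in P, forall y in P, (f x == f y) ==> (x == y)],
      f @: P \subset Q &
      [forall x, (x \notin P) ==> (f x == 1)]].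

Definition cmap P (g : gT) : {ffun gT -> gT} :=
  [ffun x => if x \in P then x ^ g else 1].

Definition fcomp P (psi phi : {ffun gT -> gT}) : {ffun gT -> gT} :=
  [ffun x => if x \in P then psi (phi x) else 1].

Definition finv P f : {ffun gT -> gT} :=
  [ffun y => if y \in f @: P then odflt 1 [pick x in P | f x == y] else 1].

(* A (candidate) fusion system: F P = Hom_F(P, S) (all morphisms out of P). *)
Definition homF (F : {set gT} -> {set {ffun gT -> gT}}) P Q :=
  [set f in F P | f @: P \subset Q].

Definition homS S P Q := [set cmap P g | g in S & P :^ g \subset Q].

Definition is_fusion_system S (F : {set gT} -> {set {ffun gT -> gT}}) : Prop :=
  [/\ (forall P Q : {group gT}, P \subset S -> Q \subset S ->
         homS S P Q \subset homF F P Q),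
      (forall P : {group gT}, P \subset S ->
         F P \subset [set f | inj_hom P S f]),
      (forall (P : {group gT}) f, P \subset S -> f \in F P ->
         finv P f \in F (f @: P)) &
      (forall (R P : {group gT}) phi psi, R \subset S -> P \subset S ->
         phi \in homF F R P -> psi \in F P -> fcomp R psi phi \in F R)].

Definition pfun P (a : {perm gT}) : {ffun gT -> gT} :=
  [ffun x => if x \in P then a x else 1].

Definition AutF (F : {set gT} -> {set {ffun gT -> gT}}) P :=
  [set a in Aut P | pfun P a \in F P].

Definition AutS S P := AutF (fun P => homS S P S) P.

Definition Fconj (F : {set gT} -> {set {ffun gT -> gT}}) P Q :=
  exists2 f, f \in F P & Q = f @: P.

Definition fully_normalized S F (P : {set gT}) :=
  forall Q : {group gT}, Fconj F P Q -> #|'N_S(Q)| <= #|'N_S(P)|.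

Definition fully_centralized S F (P : {set gT}) :=
  forall Q : {group gT}, Fconj F P Q -> #|'C_S(Q)| <= #|'C_S(P)|.

(* N_phi = { g in N_S(P) | phi c_g phi^-1 in Aut_S(phi P) } *)
Definition Nphi S P f :=
  [set g in 'N_S(P) |
     fcomp (f @: P) f (fcomp (f @: P) (cmap P g) (finv P f))
       \in homS S (f @: P) (f @: P)].

(* Saturation (Broto-Levi-Oliver, Def. 1.2) *)
Definition saturated (p : nat) S F : Prop :=
  is_fusion_system S F /\
  (forall P : {group gT}, P \subset S ->
     fully_normalized S F P ->
       fully_centralized S F P /\ p.-Sylow(AutF F P) (AutS S P)) /\
  (forall (P : {group gT}) f, P \subset S -> f \in F P ->
     fully_centralized S F (f @: P) ->
     exists2 h, h \in F (Nphi S P f) & {in P, forall x, h x = f x}).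

Definition subsystem (S0 : {set gT}) (F0 F : {set gT} -> {set {ffun gT -> gT}}) : Prop :=
  forall P : {group gT}, P \subset S0 -> F0 P \subset F P.

Definition strongly_closed (S0 : {set gT}) F : Prop :=
  forall (P : {group gT}) f, P \subset S0 -> f \in F P -> f @: P \subset S0.

Definition F_invariant (S0 : {set gT}) (F0 F : {set gT} -> {set {ffun gT -> gT}}) : Prop :=
  forall (P Q : {group gT}) phi psi,
    P \subset Q -> Q \subset S0 -> phi \in homF F Q S0 -> psi \in homF F0 P Q ->
    fcomp (phi @: P) phi (fcomp (phi @: P) psi (finv Q phi))
      \in homF F0 (phi @: P) (phi @: Q).

Definition frattini_cond (S0 : {set gT}) (F0 F : {set gT} -> {set {ffun gT -> gT}}) : Prop :=
  forall (P : {group gT}) phi, P \subset S0 -> phi \in homF F P S0 ->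
    exists2 phi0, phi0 \in homF F0 P S0 &
      exists2 alpha, alpha \in homF F S0 S0 & phi = fcomp P alpha phi0.

Definition weakly_normal (p : nat) (S0 : {set gT}) (F0 F : {set gT} -> {set {ffun gT -> gT}}) : Prop :=
  [/\ strongly_closed S0 F, saturated p S0 F0, subsystem S0 F0 F,
      F_invariant S0 F0 F & frattini_cond S0 F0 F].

End FusionDefs.

Definition Op_res (p : nat) (hT : finGroupType) (G : {set hT}) : {set hT} :=
  \bigcap_(N : {group hT} | (N <| G) && p.-group (G / N)) N.

Definition hyp (p : nat) (gT : finGroupType) (S : {set gT})
    (F : {set gT} -> {set {ffun gT -> gT}}) : {set gT} :=
  <<\bigcup_(P : {group gT} | P \subset S)
      [set (a : {perm gT}) s * s^-1 | s in P, a in Op_res p (AutF F P)]>>.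

Definition p_power_index (p : nat) (gT : finGroupType) (S S0 : {set gT})
    (F0 F : {set gT} -> {set {ffun gT -> gT}}) : Prop :=
  hyp p S F \subset S0 /\
  forall P : {group gT}, P \subset S0 -> Op_res p (AutF F P) \subset AutF F0 P.

(* Main.v *)
Require Import Defs.
From mathcomp Require Import all_boot all_fingroup all_solvable.
Import GroupScope.

Module Aux.
Set Implicit Arguments. Unset Strict Implicit. Unset Printing Implicit Defensive.

Section Helpers.
Variable gT : finGroupType.
Implicit Types (F : {set gT} -> {set {ffun gT -> gT}}).

Lemma pfun_in (P : {set gT}) (a : {perm gT}) x : x \in P -> pfun P a x = a x.
Proof. by rewrite /pfun ffunE => ->. Qed.

Lemma pfun_out (P : {set gT}) (a : {perm gT}) x : x \notin P -> pfun P a x = 1.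
Proof. by rewrite /pfun ffunE => /negbTE ->. Qed.

Lemma fcomp_in (P : {set gT}) f g x : x \in P -> fcomp P f g x = f (g x).
Proof. by rewrite /fcomp ffunE => ->. Qed.

Lemma fcomp_out (P : {set gT}) f g x : x \notin P -> fcomp P f g x = 1.
Proof. by rewrite /fcomp ffunE => /negbTE ->. Qed.

Lemma bigcap_ind (T I : finType) (Pr : pred I) (Fm : I -> {set T}) (K : {set T} -> Prop) :
  K setT -> (forall X Y, K X -> K Y -> K (X :&: Y)) -> (forall i, Pr i -> K (Fm i)) ->
  K (\bigcap_(i | Pr i) Fm i).
Proof. by move=> *; apply: big_ind. Qed.

Lemma fs_inj S F (P : {group gT}) f : is_fusion_system S F -> P \subset S ->
  f \in F P -> inj_hom P S f.
Proof. by case=> _ H2 _ _ sPS fF; have := subsetP (H2 P sPS) f fF; rewrite inE. Qed.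

Lemma fs_mapsto S F (P : {group gT}) f x : is_fusion_system S F -> P \subset S ->
  f \in F P -> x \in P -> f x \in S.
Proof.
move=> fs sPS fF xP; have /and4P[_ _ sub _] := fs_inj fs sPS fF.
by apply: (subsetP sub); apply: imset_f.
Qed.

Lemma fs_id (S : {group gT}) F (P : {group gT}) : is_fusion_system S F -> P \subset S ->
  pfun P 1 \in F P.
Proof.
case=> H1 _ _ _ sPS.
have := subsetP (H1 P S sPS (subxx _)) (cmap P 1).
rewrite inE => /(_ _) /andP[] //.
  by apply/imsetP; exists 1; rewrite ?inE ?group1 ?conjsg1.
move=> h _; suff -> : pfun P 1 = cmap P 1 by [].
by apply/ffunP=> x; rewrite !ffunE perm1 conjg1.
Qed.

Lemma AutF_group (S : {group gT}) F (P : {group gT}) : is_fusion_system S F -> P \subset S ->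
  group_set (AutF F P).
Proof.
move=> fs sPS; apply/group_setP; split.
  by rewrite inE group1 (fs_id fs sPS).
move=> a b /setIdP[aA aF] /setIdP[bA bF]; rewrite inE.
rewrite (groupM aA bA) /=.
have -> : pfun P (a * b) = fcomp P (pfun P b) (pfun P a).
  apply/ffunP=> x; rewrite !ffunE; case: ifP => // xP.
  by rewrite permM (Aut_closed aA xP).
case: fs => _ _ _ H4; apply: (H4 P P) => //.
rewrite inE aF; apply/subsetP=> y /imsetP[x xP ->].
by rewrite pfun_in // Aut_closed.
Qed.

Lemma finv_pfun (P : {group gT}) (a : {perm gT}) z : a \in Aut P -> z \in P ->
  Defs.finv P (pfun P a) z = a^-1 z.
Proof.
move=> aA zP; rewrite /Defs.finv ffunE.
have zi : z \in [set pfun P a x | x in P].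
  apply/imsetP; exists (a^-1 z); first by rewrite Aut_closed ?groupV.
  by rewrite pfun_in ?permKV // Aut_closed ?groupV.
rewrite zi; case: pickP => [x /andP[xP /eqP <-]|/(_ (a^-1 z))] /=.
  by rewrite pfun_in // permK.
by rewrite Aut_closed ?groupV // pfun_in ?Aut_closed ?groupV // permKV eqxx.
Qed.


Lemma to_perm (S0 : {group gT}) (Sx : {set gT}) (alpha : {ffun gT -> gT}) :
  inj_hom S0 Sx alpha -> [set alpha x | x in S0] \subset S0 ->
  exists2 a, a \in Aut S0 & pfun S0 a = alpha.
Proof.
case/and4P=> /forall_inP hM /forall_inP hI _ /forallP hO sub.
have mS x : x \in S0 -> alpha x \in S0 by move=> xS; apply: (subsetP sub); apply: imset_f.
pose f x := if x \in S0 then alpha x else x.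
have finj : injective f.
  move=> x y; rewrite /f; case: ifP => xS; case: ifP => yS.
  - by move=> e; apply/eqP; move/forall_inP: (hI x xS) => /(_ y yS); rewrite e eqxx.
  - by move=> e; move: yS; rewrite -e mS.
  - by move=> e; move: xS; rewrite e mS.
  - by [].
exists (perm finj).
  rewrite inE; apply/andP; split.
    by apply/subsetP=> x; rewrite inE permE /f; case: ifP => //; rewrite eqxx.
  apply/morphicP=> x y xS yS; rewrite !permE /f xS yS groupM //.
  by move/forall_inP: (hM x xS) => /(_ y yS) /eqP.
apply/ffunP=> x; rewrite ffunE permE /f; case: (boolP (x \in S0)) => xS //.
by move/implyP: (hO x) => /(_ xS) /eqP.
Qed.


Section Rel.
Variables (S S0 P : {group gT}) (F F0 : {set gT} -> {set {ffun gT -> gT}}).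
Hypotheses (fsF : is_fusion_system S F) (fs0 : is_fusion_system S0 F0)
  (sS0S : S0 \subset S) (sPS0 : P \subset S0) (inv : F_invariant S0 F0 F).

Definition Rel (g x : {perm gT}) :=
  exists2 psi, psi \in F0 P & {in P, forall y, g (psi y) = x y}.

Lemma Rel1 : Rel 1 1.
Proof.
exists (pfun P 1); first exact: (fs_id fs0 sPS0).
by move=> y yP; rewrite pfun_in // !perm1.
Qed.

Lemma RelM g1 x1 g2 x2 : g2 \in AutF F S0 -> x2 \in Aut P ->
  Rel g1 x1 -> Rel g2 x2 -> Rel (g2 * g1) (x2 * x1).
Proof.
move=> g2G x2A [psi1 psi1F e1] [psi2 psi2F e2].
have gG := AutF_group fsF sS0S.
have hG : g2^-1 \in AutF F S0 by rewrite (@groupV _ (Group gG)).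
case/setIdP: hG => hA hF.
set h := g2^-1 in hA hF.
set phi := pfun S0 h in hF.
have phiP : [set phi x | x in P] = [set h x | x in P].
  by apply: eq_in_imset => y yP; rewrite /phi pfun_in // (subsetP sPS0).
pose Q2 := (autm hA @* P)%G.
have eQ : (Q2 : {set gT}) = [set h x | x in P].
  by rewrite /= morphimEsub // autmE.
have sQS0 : Q2 \subset S0.
  rewrite eQ; apply/subsetP=> z /imsetP[y yP ->].
  by rewrite Aut_closed // (subsetP sPS0).
have phiF : phi \in homF F S0 S0.
  rewrite inE hF; apply/subsetP=> z /imsetP[y yP ->].
  by rewrite /phi pfun_in // Aut_closed.
have psi1H : psi1 \in homF F0 P S0.
  rewrite inE psi1F; apply/subsetP=> z /imsetP[y yP ->].
  exact: (fs_mapsto fs0 sPS0 psi1F yP).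
have := inv sPS0 (subxx _) phiF psi1H.
set chi := fcomp _ _ _ => /setIdP[chiF _].
rewrite phiP -eQ in chiF.
have psi2v y : y \in P -> psi2 y = h (x2 y).
  by move=> yP; rewrite -(e2 y yP) /h permK.
have psi2H : psi2 \in homF F0 P Q2.
  rewrite inE psi2F eQ; apply/subsetP=> z /imsetP[y yP ->].
  by rewrite psi2v // imset_f // Aut_closed.
case: fs0 => _ _ _ H4.
have cF := H4 P Q2 psi2 chi sPS0 sQS0 psi2H chiF.
exists (fcomp P chi psi2) => // y yP.
have x2y : x2 y \in P by rewrite Aut_closed.
have x2yS : x2 y \in S0 by rewrite (subsetP sPS0).
have hS : h (x2 y) \in S0 by rewrite Aut_closed.
have hi : h (x2 y) \in [set h x | x in P] by apply: imset_f.
rewrite ffunE yP /chi ffunE psi2v // phiP ifT; last exact: hi.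
have p1S : psi1 (x2 y) \in S0 by exact: (fs_mapsto fs0 sPS0 psi1F x2y).
have inner : fcomp [set h x | x in P] psi1 (Defs.finv S0 phi) (h (x2 y)) = psi1 (x2 y).
  rewrite ffunE ifT; last exact: hi.
  by rewrite /phi finv_pfun // /h invgK permKV.
rewrite inner /phi pfun_in //.
by rewrite !permM /h permKV e1.
Qed.

Lemma RelX g x n : g \in AutF F S0 -> x \in Aut P -> Rel g x -> Rel (g ^+ n) (x ^+ n).
Proof.
move=> gG xA r; elim: n => [|n IH]; first by rewrite !expg0; exact: Rel1.
have gG' := AutF_group fsF sS0S.
rewrite !expgSr; apply: RelM => //.
  by rewrite (@groupX _ (Group gG')).
by rewrite groupX.
Qed.

Lemma Rel_in g x : g \in AutF F0 S0 -> x \in Aut P -> Rel g x -> x \in AutF F0 P.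
Proof.
case/setIdP=> gA gF xA [psi psiF e].
rewrite inE xA /=.
have -> : pfun P x = fcomp P (pfun S0 g) psi.
  apply/ffunP=> y; rewrite !ffunE; case: ifP => // yP.
  by rewrite (fs_mapsto fs0 sPS0 psiF yP) e.
case: fs0 => _ _ _ H4; apply: (H4 P S0) => //.
rewrite inE psiF; apply/subsetP=> z /imsetP[y yP ->].
exact: (fs_mapsto fs0 sPS0 psiF yP).
Qed.

Hypothesis frat : frattini_cond S0 F0 F.

Lemma Rel_frat h : h \in AutF F P -> exists2 a, a \in AutF F S0 & Rel a h.
Proof.
have sPS := subset_trans sPS0 sS0S.
case/setIdP=> hA hF.
have hH : pfun P h \in homF F P S0.
  rewrite inE hF; apply/subsetP=> z /imsetP[y yP ->].
  by rewrite pfun_in // (subsetP sPS0) // Aut_closed.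
have [phi0 phi0F [alpha alphaF e]] := frat sPS0 hH.
case/setIdP: alphaF => alF alS.
have [a aA ea] := to_perm (fs_inj fsF sS0S alF) alS.
exists a; first by rewrite inE aA ea.
case/setIdP: phi0F => phi0F _.
exists phi0 => // y yP.
have := congr1 (fun f : {ffun gT -> gT} => f y) e.
rewrite /= pfun_in // ffunE yP -ea pfun_in //.
exact: (fs_mapsto fs0 sPS0 phi0F yP).
Qed.

Lemma conjN h n : h \in AutF F P -> n \in AutF F0 P -> n ^ h \in AutF F0 P.
Proof.
case/setIdP=> hA hF /setIdP[nA nF].
rewrite inE groupJ //=.
set phi := pfun P h.
have ePh : [set phi x | x in P] = P.
  have -> : [set phi x | x in P] = [set h x | x in P].
    by apply: eq_in_imset => y yP; rewrite /phi pfun_in.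
  apply/eqP; rewrite eqEcard card_imset ?leqnn ?andbT; last exact: perm_inj.
  by apply/subsetP=> z /imsetP[y yP ->]; rewrite Aut_closed.
have phiH : phi \in homF F P S0.
  by rewrite inE hF ePh.
have psiH : pfun P n \in homF F0 P P.
  rewrite inE nF; apply/subsetP=> z /imsetP[y yP ->].
  by rewrite pfun_in // Aut_closed.
have := inv (subxx _) sPS0 phiH psiH; rewrite ePh => /setIdP[chiF _].
suff -> : pfun P (n ^ h) = fcomp P phi (fcomp P (pfun P n) (Defs.finv P phi)) by [].
apply/ffunP=> y; case: (boolP (y \in P)) => yP; last by rewrite pfun_out ?fcomp_out.
rewrite pfun_in // !fcomp_in // /phi finv_pfun // !pfun_in ?Aut_closed ?groupV //.
by rewrite conjgE !permM.
Qed.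

Variable p : nat.
Hypotheses (pr : prime p) (subs : subsystem S0 F0 F)
  (hyp0 : Op_res p (AutF F S0) \subset AutF F0 S0).

Lemma step1 a : a \in AutF F S0 -> exists m, a ^+ (p ^ m) \in AutF F0 S0.
Proof.
move=> aG.
suff [m Hm] : exists m, forall k, m <= k -> a ^+ (p ^ k) \in Op_res p (AutF F S0).
  by exists m; apply: (subsetP hyp0); apply: Hm.
have Gs := AutF_group fsF sS0S.
rewrite /Op_res; move: a aG.
apply: (bigcap_ind (K := fun X : {set {perm gT}} => forall a, a \in AutF F S0 ->
    exists m, forall k, m <= k -> a ^+ (p ^ k) \in X)).
- by move=> a _; exists 0 => k _; rewrite inE.
- move=> X Y hX hY a aG; have [m1 h1] := hX a aG; have [m2 h2] := hY a aG.
  exists (maxn m1 m2) => k; rewrite geq_max => /andP[k1 k2].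
  by rewrite inE h1 ?h2.
move=> N /andP[nN pN] a aG.
have aN : a \in 'N(N) by apply: (subsetP (normal_norm nN)).
have pG : p.-group (Group Gs / N) := pN.
have ca : coset N a \in (Group Gs / N) by apply: mem_quotient.
have /p_natP [m em] := mem_p_elt pG ca.
exists m => k mk.
have e : a ^+ (p ^ k) = (a ^+ (p ^ m)) ^+ (p ^ (k - m)) by rewrite -expgM -expnD subnKC.
rewrite e groupX //; apply: coset_idr; first by rewrite groupX.
by rewrite morphX // -em expg_order.
Qed.

Lemma mainP : Op_res p (AutF F P) \subset AutF F0 P.
Proof.
have sPS := subset_trans sPS0 sS0S.
have Hs := AutF_group fsF sPS.
have Ns := AutF_group fs0 sPS0.
pose Hg := Group Hs; pose Ng := Group Ns.
have sNH : Ng \subset Hg.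
  apply/subsetP=> n /setIdP[nA nF]; rewrite inE nA /=.
  exact: (subsetP (subs sPS0)).
have nNH : Hg \subset 'N(Ng).
  apply/normsP=> h hH; apply/eqP; rewrite eqEcard cardJg leqnn andbT.
  apply/subsetP=> z; rewrite mem_conjg => zN.
  have -> : z = (z ^ h^-1) ^ h by rewrite conjgKV.
  exact: conjN.
have step3 h : h \in Hg -> exists m, h ^+ (p ^ m) \in Ng.
  move=> hH; have [a aG r] := Rel_frat hH.
  have [m am] := step1 aG.
  exists m; apply: (Rel_in am); first by rewrite groupX //; case/setIdP: hH.
  apply: RelX => //; by case/setIdP: hH.
rewrite /Op_res; apply: (bigcap_inf Ng); rewrite /normal sNH nNH /=.
suff pq : p.-group (Hg / Ng) by exact: pq.
apply/pgroupP=> q qpr qd.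
have [x xQ ox] := Cauchy qpr qd.
case/morphimP: xQ ox => h hN hH -> ox.
have [m hm] := step3 h hH.
have : #[coset Ng h] %| p ^ m.
  by rewrite order_dvdn; apply/eqP; rewrite -morphX //; apply: coset_id.
rewrite ox Euclid_dvdX // dvdn_prime2 // => /andP[/eqP -> _].
by rewrite inE.
Qed.

End Rel.

End Helpers.

End Aux.

Theorem lemma4p1 (p : nat) (gT : finGroupType) (S S0 : {group gT})
    (F F0 : {set gT} -> {set {ffun gT -> gT}}) :
  prime p -> p.-group S -> saturated p S F ->
  S0 \subset S -> weakly_normal p S0 F0 F ->
  Op_res p (AutF F S0) \subset AutF F0 S0 ->
  (forall P : {group gT}, P \subset S0 -> Op_res p (AutF F P) \subset AutF F0 P) /\
  (hyp p S F \subset S0 -> p_power_index p S S0 F0 F).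
Proof.
move=> pr _ [fsF _] sS0S [_ [fs0 _] subs inv frat] hyp0.
have M : forall P : {group gT}, P \subset S0 -> Op_res p (AutF F P) \subset AutF F0 P.
  by move=> P sPS0; exact: (Aux.mainP fsF fs0 sS0S sPS0 inv frat pr subs hyp0).
by split=> // hy; split.
Qed.
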